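(* Let $(\phi,y)$ be feasible and satisfy the modified condition (MC). Let $(\phi^\dagger,y^\dagger)$ be feasible with arrival rates $t^\dagger$ such that for every $i\in\mathcal V$ and $k\in\mathcal C$, either $y_i^\dagger(k)=y_i(k)$ or $t_i^\dagger(k)=t_i(k)$. Then $T(\phi,y)\le T(\phi^\dagger,y^\dagger)$, where $T(\phi,y)=\sum_{(i,j)\in\mathcal E}D_{ij}(F_{ij})+\sum_{i}B_i(Y_i)$.
   Context: Network model. $\mathcal G=(\mathcal V,\mathcal E)$ is a finite directed graph with $(j,i)\in\mathcal E$ whenever $(i,j)\in\mathcal E$; $\mathcal N(i)=\{j:(i,j)\in\mathcal E\}$. $\mathcal C$ is a finite catalog; item $k$ has nonempty designated server set $\mathcal S_k\subseteq\mathcal V$. Exogenous request rates $r_i(k)\ge0$. Variables: $\phi_{ij}(k)\in[0,1]$ with $\phi_{ij}(k)=0$ if $(i,j)\notin\mathcal E$, and $y_i(k)\in[0,1]$. Flow conservation: $y_i(k)+\sum_{j}\phi_{ij}(k)=1$ if $i\notin\mathcal S_k$ and $=0$ if $i\in\mathcal S_k$. A pair $(\phi,y)$ is feasible if it satisfies these constraints and the arrival rates $t_i(k)$, solving $t_i(k)=r_i(k)+\sum_j t_j(k)\phi_{ji}(k)$, are uniquely determined and nonnegative (e.g. when for each $k$ the graph with edges $\{(i,j):\phi_{ij}(k)>0\}$ is acyclic). $f_{ji}(k)=t_i(k)\phi_{ij}(k)$, $F_{ij}=\sum_k f_{ij}(k)$, $Y_i=\sum_k y_i(k)$. $D_{ij},B_i$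 are continuously differentiable, increasing, convex, zero at $0$. Marginal cost: $\frac{\partial T}{\partial r_i(k)}=\sum_{j\in\mathcal N(i)}\phi_{ij}(k)\big(D'_{ji}(F_{ji})+\frac{\partial T}{\partial r_j(k)}\big)$, zero if $i\in\mathcal S_k$ or $y_i(k)=1$. Modified condition (MC): with $\delta_i(k)=\min\{B_i'(Y_i)/t_i(k),\ \min_{j\in\mathcal N(i)}(D'_{ji}(F_{ji})+\frac{\partial T}{\partial r_j(k)})\}$ (where $B_i'(Y_i)/t_i(k):=\infty$ if $t_i(k)=0$), for all $i,k$: $B_i'(Y_i)=t_i(k)\delta_i(k)$ if $y_i(k)>0$, $B_i'(Y_i)\ge t_i(k)\delta_i(k)$ if $y_i(k)=0$; and for all $j\in\mathcal N(i)$, $D'_{ji}(F_{ji})+\frac{\partial T}{\partial r_j(k)}=\delta_i(k)$ if $\phi_{ij}(k)>0$, $\ge\delta_i(k)$ if $\phi_{ij}(k)=0$. *)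

(* Defs.v *)
From HB Require Import structures.
From mathcomp Require Import all_boot all_order all_algebra.
From mathcomp Require Import all_classical all_reals all_analysis.
Set Implicit Arguments. Unset Strict Implicit. Unset Printing Implicit Defensive.
Import Order.TTheory GRing.Theory Num.Theory numFieldNormedType.Exports.
Local Open Scope ring_scope.

Section Network.
Variables (R : realType) (V C : finType) (E : rel V) (S : C -> {set V})
  (r : V -> C -> R).

Definition cost_fun (f : R -> R) : Prop :=
  [/\ (forall x : R, derivable f x 1),
      continuous (derive1 f),
      (forall x z : R, x < z -> f x < f z),
      (forall (x z a : R), 0 <= a <= 1 ->
          f (a * x + (1 - a) * z) <= a * f x + (1 - a) * f z)
    & f 0 = 0].

Definition arrival_rates (phi : V -> V -> C -> R) (t : V -> C -> R) : Prop :=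
  forall i k, t i k = r i k + \sum_(j : V) t j k * phi j i k.

Definition feasible (phi : V -> V -> C -> R) (y : V -> C -> R) : Prop :=
  [/\ (forall i j k, 0 <= phi i j k <= 1),
      (forall i j k, ~~ E i j -> phi i j k = 0),
      (forall i k, 0 <= y i k <= 1)
    & (forall i k, y i k + \sum_(j : V) phi i j k
                     = (if i \in S k then 0 else 1))] /\
  [/\ (exists t, arrival_rates phi t),
      (forall t1 t2, arrival_rates phi t1 -> arrival_rates phi t2 -> t1 = t2)
    & (forall t, arrival_rates phi t -> forall i k, 0 <= t i k)].

(* F i j = F_{ij} = sum_k f_{ij}(k), with f_{ij}(k) = t_j(k) phi_{ji}(k). *)
Definition Flow (phi : V -> V -> C -> R) (t : V -> C -> R) (i j : V) : R :=
  \sum_(k : C) t j k * phi j i k.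

Definition Ycache (y : V -> C -> R) (i : V) : R := \sum_(k : C) y i k.

Definition total_cost (D : V -> V -> R -> R) (B : V -> R -> R)
  (phi : V -> V -> C -> R) (y : V -> C -> R) (t : V -> C -> R) : R :=
  \sum_(i : V) \sum_(j : V | E i j) D i j (Flow phi t i j)
  + \sum_(i : V) B i (Ycache y i).

(* dT i k stands for dT/dr_i(k): it satisfies the recursion of the paper. *)
Definition marginal_cost (D : V -> V -> R -> R)
  (phi : V -> V -> C -> R) (y : V -> C -> R) (t : V -> C -> R)
  (dT : V -> C -> R) : Prop :=
  forall i k, dT i k =
    if (i \in S k) || (y i k == 1) then 0
    else \sum_(j : V | E i j)
           phi i j k * (derive1 (D j i) (Flow phi t j i) + dT j k).

(* delta_i(k), valued in the extended reals; B'/t := +oo when t = 0,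
   and the min over an empty neighbourhood is +oo. *)
Definition delta (D : V -> V -> R -> R) (B : V -> R -> R)
  (phi : V -> V -> C -> R) (y : V -> C -> R) (t : V -> C -> R)
  (dT : V -> C -> R) (i : V) (k : C) : \bar R :=
  Order.min (if t i k == 0 then +oo%E else (derive1 (B i) (Ycache y i) / t i k)%:E)
            (\big[Order.min/+oo%E]_(j : V | E i j)
                (derive1 (D j i) (Flow phi t j i) + dT j k)%:E).

Definition modified_condition (D : V -> V -> R -> R) (B : V -> R -> R)
  (phi : V -> V -> C -> R) (y : V -> C -> R) (t : V -> C -> R)
  (dT : V -> C -> R) : Prop :=
  forall i k,
    let d := delta D B phi y t dT i k in
    [/\ (0 < y i k -> (derive1 (B i) (Ycache y i))%:E = ((t i k)%:E * d)%E),
        (y i k = 0 -> ((t i k)%:E * d <= (derive1 (B i) (Ycache y i))%:E)%E)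
      & (forall j, E i j ->
          (0 < phi i j k ->
             (derive1 (D j i) (Flow phi t j i) + dT j k)%:E = d)
          /\ (phi i j k = 0 ->
             (d <= (derive1 (D j i) (Flow phi t j i) + dT j k)%:E)%E))].

End Network.

(* Main.v *)
Require Import Defs.
From HB Require Import structures.
From mathcomp Require Import all_boot all_order all_algebra.
From mathcomp Require Import all_classical all_reals all_analysis.
Import Order.TTheory GRing.Theory Num.Theory numFieldNormedType.Exports.
Local Open Scope classical_set_scope.
Local Open Scope ring_scope.
From mathcomp Require Import ring lra.

Lemma cvx_seg (R : realType) (f : R -> R) : cost_fun f ->
  forall x z s, 0 <= s <= 1 -> f (x + s * (z - x)) <= f x + s * (f z - f x).
Proof.
case=> _ _ _ cvx _ x z s /andP[s0 s1].
have := cvx x z (1 - s).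
have -> : (1 - s) * x + (1 - (1 - s)) * z = x + s * (z - x) by ring.
have -> : (1 - s) * f x + (1 - (1 - s)) * f z = f x + s * (f z - f x) by ring.
apply; apply/andP; split; lra.
Qed.

Lemma tangent (R : realType) (f : R -> R) : cost_fun f ->
  forall x z, f x + derive1 f x * (z - x) <= f z.
Proof.
move=> cf x z; have cf' := cf; case: cf' => df _ _ _ _.
set g := fun h : R => h^-1 * (f (h + x) - f x).
have hg : g @ 0^' --> derive1 f x.
  have := df x; rewrite /derivable => /cvg_ex[l hl].
  rewrite derive1E /derive.
  have -> : g = (fun h => h^-1 *: ((f \o shift x) (h *: 1) - f x)).
    by apply/funext => h; rewrite /g /= [h%:A]mulr1.
  exact: cvgP hl.
have key : forall h, z != x -> 0 <= h / (z - x) <= 1 ->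
    f (h + x) - f x <= h / (z - x) * (f z - f x).
  move=> h zx hs; have := @cvx_seg _ f cf x z _ hs.
  have -> : x + h / (z - x) * (z - x) = h + x.
    by rewrite -mulrA mulVf ?subr_eq0 // mulr1 addrC.
  lra.
case: (ltgtP z x) => hzx; last first.
- by rewrite hzx subrr mulr0 addr0.
- have zx : z != x by rewrite gt_eqF.
  have hzx' : 0 < z - x by rewrite subr_gt0.
  have le : derive1 f x <= (f z - f x) / (z - x).
    apply: (cvgr_to_le (cvg_dnbhs_at_right hg)).
    near=> h.
    have h0 : 0 < h by near: h; exact: nbhs_right_gt.
    have h1 : h <= z - x by near: h; exact: nbhs_right_le.
    have := key h zx; rewrite /g.
    have hs : 0 <= h / (z - x) <= 1.
      apply/andP; split; first by rewrite mulr_ge0 ?invr_ge0 // ltW.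
      by rewrite ler_pdivrMr // mul1r.
    move=> /(_ hs) H.
    rewrite ler_pdivlMr //.
    have e : h^-1 * (z - x) * (h / (z - x) * (f z - f x)) = f z - f x.
      have hn : h != 0 by apply/negP => /eqP h00; rewrite h00 ltxx in h0.
      have zn : z - x != 0 by rewrite subr_eq0.
      by field; rewrite hn zn.
    have := @ler_wpM2l _ (h^-1 * (z - x)) _ _ _ H; rewrite e.
    by rewrite mulrAC; apply; rewrite mulr_ge0 ?invr_ge0 // ltW.

  move: le; rewrite ler_pdivlMr //; lra.
- have zx : z != x by rewrite lt_eqF.
  have hzx' : z - x < 0 by rewrite subr_lt0.
  have le : (f z - f x) / (z - x) <= derive1 f x.
    apply: (cvgr_to_ge (cvg_dnbhs_at_left hg)).
    near=> h.
    have h0 : h < 0 by near: h; exact: nbhs_left_lt.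
    have h1 : z - x <= h by near: h; exact: nbhs_left_ge.
    have := key h zx; rewrite /g.
    have hs : 0 <= h / (z - x) <= 1.
      apply/andP; split; first by rewrite mulr_le0 ?invr_le0 // ltW.
      by rewrite ler_ndivrMr // mul1r.
    move=> /(_ hs) H.
    rewrite ler_ndivrMr //.
    have e : h^-1 * (z - x) * (h / (z - x) * (f z - f x)) = f z - f x.
      have hn : h != 0 by apply/negP => /eqP h00; rewrite h00 ltxx in h0.
      have zn : z - x != 0 by rewrite subr_eq0.
      by field; rewrite hn zn.
    have := @ler_wpM2l _ (h^-1 * (z - x)) _ _ _ H; rewrite e.
    by rewrite mulrAC; apply; rewrite mulr_le0 ?invr_le0 // ltW.

  move: le; rewrite ler_ndivrMr //; lra.
Unshelve. all: by end_near.
Qed.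

Lemma sum0_nonneg (R : realType) (V : finType) (F : V -> R) :
  (forall j, 0 <= F j) -> \sum_j F j = 0 -> forall j, F j = 0.
Proof. by move=> H0 Hs j; apply: (psumr_eq0P (P:=xpredT)) => // i _; exact: H0. Qed.

Lemma Q_nonneg (R : realType) (V : finType) (E : pred V)
  (phi phid dd : V -> R) (y yd tt ttd Bp dTi : R) (d : \bar R) (srv : bool) :
 (forall j, 0 <= phi j) -> (forall j, 0 <= phid j) ->
 (forall j, ~~ E j -> phi j = 0) -> (forall j, ~~ E j -> phid j = 0) ->
 0 <= y -> 0 <= yd -> 0 <= ttd ->
 y + \sum_j phi j = (if srv then 0 else 1) ->
 yd + \sum_j phid j = (if srv then 0 else 1) ->
 dTi = \sum_j phi j * dd j ->
 d != -oo%E ->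
 (0 < y -> Bp%:E = (tt%:E * d)%E) -> (y = 0 -> (tt%:E * d <= Bp%:E)%E) ->
 (forall j, E j -> (0 < phi j -> (dd j)%:E = d) /\ (phi j = 0 -> (d <= (dd j)%:E)%E)) ->
 (yd = y \/ ttd = tt) ->
 0 <= ttd * (\sum_j dd j * phid j - dTi) + Bp * (yd - y).
Proof.
move=> phi0 phid0 phiE phidE y0 yd0 ttd0 cons consd hdT dninf MCy MCy0 MCj hch.
have sphi0 : 0 <= \sum_j phi j by apply: sumr_ge0 => j _.
have sphid0 : 0 <= \sum_j phid j by apply: sumr_ge0 => j _.
case: srv cons consd => cons consd.
  have ey : y = 0 by lra.
  have eyd : yd = 0 by lra.
  have pz : forall j, phi j = 0 by apply: sum0_nonneg => //; lra.
  have pdz : forall j, phid j = 0 by apply: sum0_nonneg => //; lra.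
  have s1 : \sum_j phi j * dd j = 0 by rewrite big1 // => j _; rewrite pz mul0r.
  have s2 : \sum_j dd j * phid j = 0 by rewrite big1 // => j _; rewrite pdz mulr0.
  by rewrite hdT ey eyd s1 s2 subrr !mulr0 addr0.
case: (pickP E) => [j0 Ej0|noE]; last first.
  have pz : forall j, phi j = 0 by move=> j; apply: phiE; rewrite noE.
  have pdz : forall j, phid j = 0 by move=> j; apply: phidE; rewrite noE.
  have s1 : \sum_j phi j * dd j = 0 by rewrite big1 // => j _; rewrite pz mul0r.
  have s2 : \sum_j dd j * phid j = 0 by rewrite big1 // => j _; rewrite pdz mulr0.
  rewrite hdT s1 s2.
  have s3 : \sum_j phi j = 0 by rewrite big1 // => j _; rewrite pz.
  have s4 : \sum_j phid j = 0 by rewrite big1 // => j _; rewrite pdz.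
  have ey : y = 1 by lra.
  have eyd : yd = 1 by lra.
  by rewrite ey eyd !subrr !mulr0 addr0.
have dle : (d <= (dd j0)%:E)%E.
  have [h1 h2] := MCj j0 Ej0.
  have := phi0 j0; rewrite le_eqVlt => /orP[/eqP e|p].
    by apply: h2.
  by rewrite h1.
case: d dninf MCy MCy0 MCj dle => [del| |] // _ MCy MCy0 MCj dle.
have Bge : tt * del <= Bp.
  move: y0; rewrite le_eqVlt => /orP[/eqP e|p].
    by rewrite -lee_fin EFinM; apply: MCy0; rewrite -e.
  by rewrite -lee_fin EFinM (MCy p).
have Sd : del * (1 - yd) <= \sum_j dd j * phid j.
  have -> : 1 - yd = \sum_j phid j by lra.
  rewrite mulr_sumr; apply: ler_sum => j _.
  case Ej: (E j); last by rewrite phidE ?Ej // !mulr0.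
  apply: ler_wpM2r => //.
  have [h1 h2] := MCj j Ej.
  have := phi0 j; rewrite le_eqVlt => /orP[/eqP e|p].
    by rewrite -lee_fin; apply: h2.
  by rewrite -lee_fin h1.
have edT : dTi = del * (1 - y).
  have -> : 1 - y = \sum_j phi j by lra.
  rewrite hdT mulr_sumr; apply: eq_bigr => j _.
  case Ej: (E j); last by rewrite phiE ?Ej // !mulr0 mul0r.
  have [h1 h2] := MCj j Ej.
  have := phi0 j; rewrite le_eqVlt => /orP[/eqP e|p].
    by rewrite -e !mul0r mulr0.
  by rewrite mulrC; congr (_ * _); apply: EFin_inj; rewrite h1.
have step : ttd * (del * (1 - yd) - dTi) <= ttd * (\sum_j dd j * phid j - dTi).
  by apply: ler_wpM2l => //; rewrite lerD2r.
apply: (@le_trans _ _ (ttd * (del * (1 - yd) - dTi) + Bp * (yd - y))); last by rewrite lerD2r.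
rewrite edT.
case: hch => [-> | ->]; first by lra.
move: y0; rewrite le_eqVlt => /orP[/eqP e|p].
  rewrite -e. 
  have : 0 <= yd * (Bp - tt * del) by apply: mulr_ge0 => //; lra.
  lra.
have eB : Bp = tt * del by apply: EFin_inj; rewrite EFinM (MCy p).
rewrite eB; lra.
Qed.

Lemma delta_ninf (R : realType) (V C : finType) (E : rel V) D B phi y t dT i k :
  delta (R:=R) (V:=V) (C:=C) E D B phi y t dT i k != -oo%E.
Proof.
rewrite /delta.
have minP : forall a b : \bar R, a != -oo%E -> b != -oo%E -> Order.min a b != -oo%E.
  by move=> a b ha hb; rewrite /Order.min; case: ifP.
apply minP; first by case: ifP.
by apply: (big_ind (fun e : \bar R => e != -oo%E)) => //; exact: minP.
Qed.


Theorem corollary2 (R : realType) (V C : finType) (E : rel V)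
  (S : C -> {set V}) (r : V -> C -> R)
  (D : V -> V -> R -> R) (B : V -> R -> R)
  (phi phid : V -> V -> C -> R) (y yd : V -> C -> R)
  (t td dT : V -> C -> R) :
  (forall i j, E i j -> E j i) ->
  (forall k, S k != finset.set0) ->
  (forall i k, 0 <= r i k) ->
  (forall i j, E i j -> cost_fun (D i j)) ->
  (forall i, cost_fun (B i)) ->
  feasible E S r phi y ->
  arrival_rates r phi t ->
  marginal_cost E S D phi y t dT ->
  modified_condition E D B phi y t dT ->
  feasible E S r phid yd ->
  arrival_rates r phid td ->
  (forall i k, yd i k = y i k \/ td i k = t i k) ->
  total_cost E D B phi y t <= total_cost E D B phid yd td.
Proof.
move=> symE _ _ Dcf Bcf [[phi01 phiE y01 cons] _] art mc MC
  [[phid01 phidE yd01 consd] [_ _ tdnn]] artd hch.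
have td0 : forall i k, 0 <= td i k := tdnn td artd.
pose Dp i j := derive1 (D i j) (Flow phi t i j).
pose Bp i := derive1 (B i) (Ycache y i).
pose dd i j k := Dp j i + dT j k.
pose LD := \sum_i \sum_(j | E i j) Dp i j * (Flow phid td i j - Flow phi t i j).
pose LB := \sum_i Bp i * (Ycache yd i - Ycache y i).
have stepA : total_cost E D B phi y t + (LD + LB) <= total_cost E D B phid yd td.
  rewrite /total_cost addrACA; apply: lerD.
  - rewrite /LD -big_split; apply: ler_sum => i _; rewrite -big_split.
    apply: ler_sum => j Eij /=.
    exact: (@tangent _ _ (Dcf i j Eij)).
  - rewrite /LB -big_split; apply: ler_sum => i _ /=.
    exact: (@tangent _ _ (Bcf i)).
suff stepB : 0 <= LD + LB.
  by apply: le_trans stepA; rewrite lerDl.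
have eLD : LD = \sum_i \sum_k \sum_j Dp j i * (td i k * phid i j k - t i k * phi i j k).
  rewrite /LD.
  transitivity (\sum_i \sum_j Dp i j * (Flow phid td i j - Flow phi t i j)).
    apply: eq_bigr => i _; rewrite [RHS](bigID (fun j => E i j)) /=.
    rewrite [X in _ = _ + X]big1 ?addr0 // => j nE.
    have nE' : ~~ E j i by apply: contra nE; apply: symE.
    by rewrite /Flow !big1 ?subrr ?mulr0 // => k _; rewrite ?phiE ?phidE // mulr0.
  rewrite exchange_big /=; apply: eq_bigr => i _.
  rewrite [RHS]exchange_big /=; apply: eq_bigr => j _.
  by rewrite /Flow -sumrB mulr_sumr.
have M : forall i k, dT i k = \sum_j phi i j k * dd i j k.
  move=> i k; rewrite mc; case: ifP => [H|H].
    have s0 : \sum_j phi i j k = 0.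
      have := cons i k; have := y01 i k.
      have : 0 <= \sum_j phi i j k by apply: sumr_ge0 => j _; case/andP: (phi01 i j k).
      case/orP: H => [-> | /eqP ->] /=; first by lra.
      by case: ifP => _; lra.
    have pz : forall j, phi i j k = 0.
      by apply: sum0_nonneg => // j; case/andP: (phi01 i j k).
    by rewrite big1 // => j _; rewrite pz mul0r.
  rewrite [RHS](bigID (fun j => E i j)) /= [X in _ = _ + X]big1 ?addr0 //.
  by move=> j nE; rewrite phiE // mul0r.
have eZ : \sum_i \sum_k \sum_j dT j k * (td i k * phid i j k - t i k * phi i j k)
    = \sum_i \sum_k dT i k * (td i k - t i k).
  rewrite exchange_big /= [RHS]exchange_big /=; apply: eq_bigr => k _.
  rewrite exchange_big /=; apply: eq_bigr => j _.
  rewrite -mulr_sumr sumrB; congr (_ * _).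
  rewrite [td j k](artd j k) [t j k](art j k).
  by rewrite opprD addrACA addrN add0r.
have eL : LD + LB = \sum_i \sum_k (td i k * (\sum_j dd i j k * phid i j k - dT i k)
                                    + Bp i * (yd i k - y i k)).
  have e1 : \sum_i \sum_k \sum_j Dp j i * (td i k * phid i j k - t i k * phi i j k)
     = \sum_i \sum_k (td i k * \sum_j dd i j k * phid i j k - t i k * dT i k)
       - \sum_i \sum_k dT i k * (td i k - t i k).
    rewrite -eZ -sumrB; apply: eq_bigr => i _; rewrite -sumrB; apply: eq_bigr => k _.
    rewrite (M i k) !mulr_sumr -!sumrB; apply: eq_bigr => j _; rewrite /dd; ring.
  have e2 : LB = \sum_i \sum_k Bp i * (yd i k - y i k).
    by rewrite /LB; apply: eq_bigr => i _; rewrite /Ycache -sumrB mulr_sumr.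
  rewrite eLD e1 e2 -sumrB -big_split; apply: eq_bigr => i _.
  rewrite -sumrB -big_split; apply: eq_bigr => k _ /=; ring.
rewrite eL; apply: sumr_ge0 => i _; apply: sumr_ge0 => k _.
have [MCy MCy0 MCj] := MC i k.
have h1 : forall j, 0 <= phi i j k by move=> j; case/andP: (phi01 i j k).
have h2 : forall j, 0 <= phid i j k by move=> j; case/andP: (phid01 i j k).
have h5 : 0 <= y i k by case/andP: (y01 i k).
have h6 : 0 <= yd i k by case/andP: (yd01 i k).
exact: (@Q_nonneg R V (E i) (fun j => phi i j k) (fun j => phid i j k) (fun j => dd i j k)
   (y i k) (yd i k) (t i k) (td i k) (Bp i) (dT i k) (delta E D B phi y t dT i k) (i \in S k)
   h1 h2 (fun j => phiE i j k) (fun j => phidE i j k) h5 h6 (td0 i k) (cons i k) (consd i k)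
   (M i k) (delta_ninf _ _ _ _ _ _ _ _ _ _ _ _) MCy MCy0 MCj (hch i k)).
Qed.
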